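(* Let $k=k(n)$ be an integer with $\frac{n}{4\ln n}<k\le n$. There is a constant $c>0$ such that if $r>\sqrt{\frac{c\ln\ln n}{k}}$, then w.h.p. $G(n,r)$ has no independent set of size $k$.
   Context: Here the $n$ points of $G(n,r)$ are chosen independently and uniformly at random on the unit torus (the unit square with wraparound); two points are joined by a straight-line edge iff their distance is at most $r=r(n)$. An independent set is a set of vertices no two of which are adjacent. ''W.h.p.'' means with probability tending to $1$ as $n\to\infty$. *)

(* Defs.v *)
From Stdlib Require Import Reals List.
Open Scope R_scope.

(* A configuration of points: point i is (x i) in R^2; only i < n matter. *)
Definition cfg := nat -> (R * R).

Definition in_unit (a : R) : Prop := 0 <= a < 1.

Definition tdist1 (a b : R) : R := Rmin (Rabs (a - b)) (1 - Rabs (a - b)).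

(* Distance on the unit torus (unit square with wraparound). *)
Definition tdist (p q : R * R) : R :=
  sqrt (tdist1 (fst p) (fst q) ^ 2 + tdist1 (snd p) (snd q) ^ 2).

Definition adjacent (r : R) (x : cfg) (i j : nat) : Prop :=
  i <> j /\ tdist (x i) (x j) <= r.

Definition independent_set (n : nat) (r : R) (x : cfg) (S : list nat) : Prop :=
  NoDup S /\ (forall i, In i S -> (i < n)%nat) /\
  (forall i j, In i S -> In j S -> ~ adjacent r x i j).

Definition has_indep_set (n : nat) (r : R) (k : nat) (x : cfg) : Prop :=
  exists S, length S = k /\ independent_set n r x S.

Definition sample (n : nat) (x : cfg) : Prop :=
  forall i, (i < n)%nat -> in_unit (fst (x i)) /\ in_unit (snd (x i)).

(* Closed boxes in (R^2)^n, coordinates i >= n ignored. *)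
Record box := mkBox { lo : nat -> R * R; hi : nat -> R * R }.

Definition in_box (n : nat) (B : box) (x : cfg) : Prop :=
  forall i, (i < n)%nat ->
    fst (lo B i) <= fst (x i) <= fst (hi B i) /\
    snd (lo B i) <= snd (x i) <= snd (hi B i).

Fixpoint prodR (f : nat -> R) (n : nat) : R :=
  match n with O => 1 | S m => prodR f m * f m end.

Definition box_vol (n : nat) (B : box) : R :=
  prodR (fun i => Rmax 0 (fst (hi B i) - fst (lo B i)) *
                  Rmax 0 (snd (hi B i) - snd (lo B i))) n.

(* Lebesgue outer measure of A (a subset of (R^2)^n) is at most eps:
   A has a countable cover by boxes of total volume <= eps. *)
Definition outer_measure_le (n : nat) (A : cfg -> Prop) (eps : R) : Prop :=
  exists Bs : nat -> box,
    (forall x, A x -> exists j, in_box n (Bs j) x) /\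
    (forall m, sum_f_R0 (fun j => box_vol n (Bs j)) m <= eps).

(* Event: G(n,r) has an independent set of size k. Its probability (for n
   i.i.d. uniform points in the unit torus) is the Lebesgue measure of this set. *)
Definition bad_event (n : nat) (r : R) (k : nat) (x : cfg) : Prop :=
  sample n x /\ has_indep_set n r k x.

Definition whp_no_indep_set (r : nat -> R) (k : nat -> nat) : Prop :=
  forall eps, 0 < eps -> exists N, forall n, (N <= n)%nat ->
    outer_measure_le n (bad_event n (r n) (k n)) eps.

(* Main.v *)
Require Import Defs.
From Stdlib Require Import Reals List Lia Lra ZArith.
Open Scope R_scope.

Definition g (m : nat) (a : R) : nat := Z.to_nat (up (INR m * a)).

Lemma g_range m a : (1 <= m)%nat -> in_unit a -> (1 <= g m a <= m)%nat.
Proof.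
  intros Hm [H0 H1]. unfold g.
  assert (Hm' : 1 <= INR m) by (apply (le_INR 1); lia).
  destruct (archimed (INR m * a)) as [A B].
  assert (INR m * a < INR m) by nra.
  assert (0 <= INR m * a) by nra.
  assert (X1 : 0 < IZR (up (INR m * a))) by lra.
  assert (X2 : IZR (up (INR m * a)) < INR m + 1) by lra.
  apply lt_IZR in X1. rewrite (INR_IZR_INZ m) in X2 at 2.
  rewrite <- plus_IZR in X2. apply lt_IZR in X2.
  pose proof (Z2Nat.id (up (INR m * a))). lia.
Qed.

Lemma g_close m a b : (1 <= m)%nat -> in_unit a -> in_unit b -> g m a = g m b ->
  Rabs (INR m * a - INR m * b) < 1.
Proof.
  intros Hm Ha Hb E. destruct Ha, Hb. unfold g in E.
  assert (Hm' : 1 <= INR m) by (apply (le_INR 1); lia).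
  destruct (archimed (INR m * a)) as [A B].
  destruct (archimed (INR m * b)) as [C D].
  assert (X1 : 0 < IZR (up (INR m * a))) by nra.
  assert (X2 : 0 < IZR (up (INR m * b))) by nra.
  apply lt_IZR in X1. apply lt_IZR in X2.
  apply Z2Nat.inj in E; try lia. rewrite E in A, B.
  apply Rabs_def1; lra.
Qed.

Lemma tdist1_bound a b : in_unit a -> in_unit b -> 0 <= tdist1 a b <= Rabs (a - b).
Proof.
  intros [] []. unfold tdist1. split.
  - apply Rmin_glb. apply Rabs_pos. assert (Rabs (a - b) < 1) by (apply Rabs_def1; lra). lra.
  - apply Rmin_l.
Qed.

Lemma close_adj m r p q : (1 <= m)%nat -> 0 < r -> 2 <= INR m * r ->
  in_unit (fst p) -> in_unit (snd p) -> in_unit (fst q) -> in_unit (snd q) ->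
  g m (fst p) = g m (fst q) -> g m (snd p) = g m (snd q) -> tdist p q <= r.
Proof.
  intros Hm Hr Hmr H1 H2 H3 H4 E1 E2.
  assert (Hm' : 1 <= INR m) by (apply (le_INR 1); lia).
  pose proof (g_close _ _ _ Hm H1 H3 E1) as C1.
  pose proof (g_close _ _ _ Hm H2 H4 E2) as C2.
  rewrite <- Rmult_minus_distr_l, Rabs_mult, Rabs_right in C1 by lra.
  rewrite <- Rmult_minus_distr_l, Rabs_mult, Rabs_right in C2 by lra.
  destruct (tdist1_bound _ _ H1 H3). destruct (tdist1_bound _ _ H2 H4).
  unfold tdist. rewrite <- (sqrt_pow2 r) by lra. apply sqrt_le_1_alt.
  set (d1 := tdist1 (fst p) (fst q)) in *. set (d2 := tdist1 (snd p) (snd q)) in *.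
  set (e1 := Rabs (fst p - fst q)) in *. set (e2 := Rabs (snd p - snd q)) in *.
  assert (INR m * d1 < 1) by nra. assert (INR m * d2 < 1) by nra.
  assert (INR m * d1 * r <= r) by nra. assert (INR m * d2 * r <= r) by nra.
  nra.
Qed.

Lemma packing n r k x S : 0 < r -> (4 <= k)%nat -> 16 < INR k * r ^ 2 ->
  sample n x -> length S = k -> independent_set n r x S -> False.
Proof.
  intros Hr Hk Hkr Hs HL [ND [Hlt Hind]].
  set (m := Z.to_nat (up (2 / r))).
  destruct (archimed (2 / r)) as [A B].
  assert (P : 0 < 2 / r) by (apply Rdiv_lt_0_compat; lra).
  assert (Hz : (0 < up (2 / r))%Z) by (apply lt_IZR; lra).
  assert (Em : INR m = IZR (up (2 / r))).
  { unfold m. rewrite INR_IZR_INZ, Z2Nat.id by lia. reflexivity. }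
  assert (Hm : (1 <= m)%nat) by (unfold m; lia).
  assert (Hmr : 2 <= INR m * r).
  { rewrite Em. assert (2 / r * r = 2) by (field; lra). nra. }
  assert (Hkk : INR k >= 4).
  { apply Rle_ge. replace 4 with (INR 4) by (simpl; lra). apply le_INR; lia. }
  assert (Hmm : (m * m < k)%nat).
  { apply INR_lt. rewrite mult_INR.
    assert (INR m <= 2 / r + 1) by lra.
    assert (0 <= INR m) by apply pos_INR.
    assert (INR m * r <= 2 + r) by (assert (2/r*r = 2) by (field; lra); nra).
    assert (Q1 : (INR m * r) ^ 2 <= (2 + r) ^ 2) by (apply pow_incr; nra).
    assert (Q2 : (2 + r) ^ 2 <= 8 + 2 * r ^ 2) by (pose proof (pow2_ge_0 (r - 2)); nra).
    assert (Q3 : 8 + 2 * r ^ 2 < INR k * r ^ 2) by nra.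
    assert (Q4 : (INR m * INR m) * r ^ 2 < INR k * r ^ 2) by nra.
    apply Rmult_lt_reg_r with (r ^ 2); [nra | exact Q4]. }
  set (f := fun i => (g m (fst (x i)), g m (snd (x i)))).
  assert (FP : ForallPairs (fun i j => f i = f j -> i = j) S).
  { intros i j Hi Hj E. destruct (Nat.eq_dec i j) as [|ne]; [assumption|].
    exfalso. apply (Hind i j Hi Hj). split; [exact ne|].
    unfold f in E. injection E as E1 E2.
    destruct (Hs i (Hlt i Hi)). destruct (Hs j (Hlt j Hj)).
    apply (close_adj m); auto. }
  pose proof (NoDup_map_NoDup_ForallPairs f FP ND) as ND'.
  assert (Inc : incl (map f S) (list_prod (seq 1 m) (seq 1 m))).
  { intros [a b] Hab. apply in_map_iff in Hab as [i [Ei Hi]].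
    unfold f in Ei. injection Ei as <- <-.
    destruct (Hs i (Hlt i Hi)) as [U1 U2].
    apply in_prod; apply in_seq;
      [pose proof (g_range m _ Hm U1) | pose proof (g_range m _ Hm U2)]; lia. }
  pose proof (NoDup_incl_length ND' Inc) as LL.
  rewrite length_map, length_prod, !length_seq in LL. lia.
Qed.

Lemma INR_ge_up (z : R) n : (Z.to_nat (up z) <= n)%nat -> z < INR n.
Proof.
  intros H. destruct (archimed z) as [A _].
  destruct (Z_lt_le_dec (up z) 0) as [h|h].
  - apply IZR_lt in h. pose proof (pos_INR n). lra.
  - apply le_INR in H. rewrite INR_IZR_INZ, Z2Nat.id in H by lia. lra.
Qed.

Lemma asym : exists N0, forall n, (N0 <= n)%nat -> 16 < ln (ln (INR n)) /\ 576 <= INR n.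
Proof.
  exists (Nat.max (Z.to_nat (up (exp (exp 17)))) 576). intros n Hn.
  assert (H1 : exp (exp 17) < INR n) by (apply INR_ge_up; lia).
  split.
  - assert (exp 17 < ln (INR n)).
    { rewrite <- (ln_exp (exp 17)). apply ln_increasing; [apply exp_pos|exact H1]. }
    assert (17 < ln (ln (INR n))).
    { rewrite <- (ln_exp 17). apply ln_increasing; [apply exp_pos|exact H]. }
    lra.
  - replace 576 with (INR 576) by (simpl; lra). apply le_INR; lia.
Qed.

Lemma k_big n k : 576 <= INR n -> INR n / (4 * ln (INR n)) < INR k -> (4 <= k)%nat.
Proof.
  intros Hn Hk. set (y := ln (INR n)).
  assert (Hy : 0 < y).
  { unfold y. rewrite <- ln_1. apply ln_increasing; lra. }
  set (s := exp (y / 2)).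
  assert (Hs : s * s = INR n).
  { unfold s. rewrite <- exp_plus. replace (y/2 + y/2) with y by field.
    unfold y. apply exp_ln. lra. }
  assert (Hsy : y / 2 < s) by (pose proof (exp_ineq1 (y/2)); unfold s; lra).
  assert (Hs0 : 0 < s) by apply exp_pos.
  assert (Hs24 : 24 <= s) by nra.
  assert (Hk' : INR n < INR k * (4 * y)).
  { apply (Rmult_lt_compat_r (4 * y)) in Hk; [|lra].
    unfold Rdiv in Hk. rewrite Rmult_assoc, Rinv_l in Hk by lra. lra. }
  destruct (le_lt_dec 4 k) as [|h]; [assumption|exfalso].
  assert (INR k <= 3) by (replace 3 with (INR 3) by (simpl; lra); apply le_INR; lia).
  pose proof (pos_INR k). nra.
Qed.

Lemma sum_zero n m (Bs : nat -> box) : (1 <= n)%nat ->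
  (forall j, Bs j = mkBox (fun _ => (0,0)) (fun _ => (0,0))) ->
  sum_f_R0 (fun j => box_vol n (Bs j)) m = 0.
Proof.
  intros Hn HB. destruct n as [|n']; [lia|].
  assert (E : forall j, box_vol (S n') (Bs j) = 0).
  { intros j. rewrite HB. unfold box_vol. simpl.
    rewrite Rminus_diag, Rmax_left by lra. ring. }
  induction m; simpl; rewrite E; [reflexivity| rewrite IHm; ring].
Qed.

Theorem corollary6 :
  exists c : R, 0 < c /\
  forall (k : nat -> nat) (r : nat -> R),
    (exists N, forall n, (N <= n)%nat ->
        INR n / (4 * ln (INR n)) < INR (k n) /\ (k n <= n)%nat) ->
    (exists N, forall n, (N <= n)%nat ->
        r n > sqrt (c * ln (ln (INR n)) / INR (k n))) ->
    whp_no_indep_set r k.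
Proof.
  exists 1. split; [lra|]. intros k r [N1 H1] [N2 H2] eps Heps.
  destruct asym as [N0 H0].
  exists (Nat.max N0 (Nat.max N1 (Nat.max N2 1))). intros n Hn.
  destruct (H0 n ltac:(lia)) as [Hl Hn576].
  destruct (H1 n ltac:(lia)) as [Hk _].
  specialize (H2 n ltac:(lia)).
  pose proof (k_big _ _ Hn576 Hk) as Hk4.
  assert (Hkpos : 4 <= INR (k n)) by (replace 4 with (INR 4) by (simpl; lra); apply le_INR; lia).
  set (a := 1 * ln (ln (INR n)) / INR (k n)) in H2.
  assert (Ha : 0 <= a) by (unfold a; apply Rle_mult_inv_pos; lra).
  assert (Hr : 0 < r n) by (pose proof (sqrt_pos a); lra).
  assert (Har : a < r n ^ 2).
  { pose proof (sqrt_sqrt a Ha). pose proof (sqrt_pos a). nra. }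
  assert (Hkr : 16 < INR (k n) * r n ^ 2).
  { unfold a in Har. apply (Rmult_lt_compat_l (INR (k n))) in Har; [|lra].
    replace (INR (k n) * (1 * ln (ln (INR n)) / INR (k n))) with (ln (ln (INR n))) in Har
      by (field; lra). lra. }
  exists (fun _ => mkBox (fun _ => (0,0)) (fun _ => (0,0))). split.
  - intros x [Hs [S [HL HI]]]. exfalso. exact (packing n (r n) (k n) x S Hr Hk4 Hkr Hs HL HI).
  - intros m. rewrite (sum_zero n m); [lra|lia|reflexivity].
Qed.
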